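(* For all integers $m,n\geq 5$ with $m\neq 6$, $m\neq 8$ and $n\neq 7$, $\chi_i(C_m\Box C_n)\leq 6$.
   Context: For a graph $G$, an incidence is a pair $(v,e)$ with $v\in V(G)$, $e\in E(G)$ and $v$ incident with $e$. Two incidences $(v,e)$ and $(w,f)$ are adjacent if $v=w$, or $e=f$, or the edge $vw$ equals $e$ or $f$. An incidence $k$-coloring of $G$ is a map from the set of incidences of $G$ to a set of $k$ colors such that adjacent incidences receive distinct colors; the incidence chromatic number $\chi_i(G)$ is the least such $k$. $C_n$ denotes the cycle on $n$ vertices and $\Box$ the Cartesian product of graphs: $G\Box H$ has vertex set $V(G)\times V(H)$, with $(u_1,v_1)$ adjacent to $(u_2,v_2)$ iff either $u_1=u_2$ and $v_1v_2\in E(H)$, or $v_1=v_2$ and $u_1u_2\in E(G)$. *)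

(* Defs.v *)
From mathcomp Require Import all_boot.
Set Implicit Arguments. Unset Strict Implicit. Unset Printing Implicit Defensive.

(* A simple graph is given by a vertex finType T and an adjacency relation
   adj (assumed symmetric and irreflexive for the graphs we use). *)

Definition edges (T : finType) (adj : rel T) : {set {set T}} :=
  [set E : {set T} | [exists x : T, exists y : T, adj x y && (E == [set x; y])]].

Definition is_incidence (T : finType) (adj : rel T) (p : T * {set T}) : bool :=
  (p.2 \in edges adj) && (p.1 \in p.2).

Definition inc_adjacent (T : finType) (p q : T * {set T}) : bool :=
  [|| p.1 == q.1, p.2 == q.2, [set p.1; q.1] == p.2 | [set p.1; q.1] == q.2].

Definition inc_colorable (T : finType) (adj : rel T) (k : nat) : bool :=
  [exists f : {ffun T * {set T} -> 'I_k},
    [forall p, forall q,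
      [&& is_incidence adj p, is_incidence adj q, p != q & inc_adjacent p q]
        ==> (f p != f q)]].

(* Incidence chromatic number: least k admitting an incidence k-coloring
   (searching k = 0 .. N where N = #|T * {set T}|, for which a coloring
   always exists, e.g. an injective one). *)
Definition inc_chi (T : finType) (adj : rel T) : nat :=
  find (inc_colorable adj) (iota 0 (#|{: T * {set T}}|).+1).

Definition cycle_adj (n : nat) : rel 'I_n :=
  fun i j => (val j == i.+1 %% n) || (val i == j.+1 %% n).

Definition cart_adj (U V : finType) (a : rel U) (b : rel V) : rel (U * V) :=
  fun x y => ((x.1 == y.1) && b x.2 y.2) || ((x.2 == y.2) && a x.1 y.1).

(* Main.v *)
Require Import Defs.
From mathcomp Require Import all_boot.
From mathcomp Require Import zify.
Set Implicit Arguments. Unset Strict Implicit. Unset Printing Implicit Defensive.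

Definition tab : seq (seq (seq nat)) :=
[:: [:: [:: 2; 0; 4; 1]; [:: 0; 1; 2; 3]; [:: 1; 3; 0; 5]; [:: 5; 2; 3; 4]; [:: 2; 4; 5; 0]; [:: 5; 1; 0; 3]; [:: 3; 4; 5; 2]];
    [:: [:: 5; 3; 1; 4]; [:: 3; 5; 4; 2]; [:: 5; 2; 3; 0]; [:: 0; 1; 2; 4]; [:: 5; 1; 0; 3]; [:: 4; 2; 3; 0]; [:: 0; 1; 2; 5]];
    [:: [:: 2; 0; 4; 3]; [:: 2; 0; 1; 5]; [:: 2; 4; 0; 3]; [:: 2; 3; 5; 1]; [:: 0; 2; 1; 4]; [:: 0; 1; 3; 5]; [:: 1; 4; 5; 2]];
    [:: [:: 3; 5; 0; 1]; [:: 1; 3; 5; 4]; [:: 3; 1; 4; 0]; [:: 3; 0; 1; 5]; [:: 5; 3; 4; 2]; [:: 3; 2; 1; 4]; [:: 2; 3; 4; 0]];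
    [:: [:: 5; 2; 1; 4]; [:: 4; 2; 0; 3]; [:: 4; 5; 2; 1]; [:: 1; 4; 5; 0]; [:: 1; 0; 3; 2]; [:: 4; 5; 2; 0]; [:: 0; 5; 3; 1]];
    [:: [:: 3; 5; 1; 4]; [:: 4; 5; 3; 2]; [:: 4; 2; 5; 0]; [:: 0; 1; 4; 3]; [:: 1; 3; 0; 5]; [:: 4; 2; 3; 0]; [:: 0; 1; 2; 5]]].

Definition C (a b d : nat) : nat := nth 0 (nth [::] (nth [::] tab a) b) d.

Definition ex : seq (nat * nat) := [:: (0,1);(1,2);(2,3);(3,4);(4,0);(0,5);(5,0)].
Definition ey : seq (nat * nat) := [:: (0,1);(1,2);(2,3);(3,4);(4,0);(0,5);(5,6);(6,0)].

Lemma chk_dist : all (fun a => all (fun b => all (fun d => all (fun e =>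
  (d == e) || (C a b d != C a b e)) (iota 0 4)) (iota 0 4)) (iota 0 7)) (iota 0 6).
Proof. by []. Qed.

Lemma chk_lt : all (fun a => all (fun b => all (fun d =>
  C a b d < 6) (iota 0 4)) (iota 0 7)) (iota 0 6).
Proof. by []. Qed.

Lemma chk_x : all (fun ab => all (fun b => all (fun e =>
  (C ab.1 b 0 != C ab.2 b e) && (C ab.2 b 1 != C ab.1 b e)) (iota 0 4)) (iota 0 7)) ex.
Proof. by []. Qed.

Lemma chk_y : all (fun ab => all (fun a => all (fun e =>
  (C a ab.1 2 != C a ab.2 e) && (C a ab.2 3 != C a ab.1 e)) (iota 0 4)) (iota 0 6)) ey.
Proof. by []. Qed.

Lemma inI k a : a < k -> a \in iota 0 k.
Proof. by rewrite mem_iota. Qed.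

Lemma C_dist a b d e : a < 6 -> b < 7 -> d < 4 -> e < 4 -> d != e -> C a b d != C a b e.
Proof.
move=> ha hb hd he hde.
move/allP: chk_dist => /(_ a (inI ha)) /allP /(_ b (inI hb)) /allP /(_ d (inI hd))
  /allP /(_ e (inI he)).
by rewrite (negbTE hde).
Qed.

Lemma C_lt a b d : a < 6 -> b < 7 -> d < 4 -> C a b d < 6.
Proof.
move=> ha hb hd.
by move/allP: chk_lt => /(_ a (inI ha)) /allP /(_ b (inI hb)) /allP /(_ d (inI hd)).
Qed.

Lemma C_x a a' b e : (a, a') \in ex -> b < 7 -> e < 4 ->
  (C a b 0 != C a' b e) && (C a' b 1 != C a b e).
Proof.
move=> h hb he.
by move/allP: chk_x => /(_ _ h) /allP /(_ b (inI hb)) /allP /(_ e (inI he)).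
Qed.

Lemma C_y a b b' e : (b, b') \in ey -> a < 6 -> e < 4 ->
  (C a b 2 != C a b' e) && (C a b' 3 != C a b e).
Proof.
move=> h ha he.
by move/allP: chk_y => /(_ _ h) /allP /(_ a (inI ha)) /allP /(_ e (inI he)).
Qed.

Definition alt k := if odd k then 5 else 0.
Definition lx (m i : nat) : nat :=
  if odd m then (if i < 5 then i else alt (i - 5)) else alt i.
Definition kk (n : nat) := (2 * n) %% 3.
Definition ly (n j : nat) : nat :=
  if j < 5 * kk n then j %% 5 else nth 0 [:: 0; 5; 6] ((j - 5 * kk n) %% 3).

Lemma alt_next k : (alt k, alt k.+1) \in ex.
Proof. by rewrite /alt /=; case: (odd k). Qed.

Lemma lx_lt m i : lx m i < 6.
Proof. rewrite /lx /alt; case: (odd m); [case: ifP => h; [lia|] |]; by case: ifP. Qed.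

Lemma lx_next m i : 4 <= m -> i < m -> (lx m i, lx m (i.+1 %% m)) \in ex.
Proof.
move=> hm hi; rewrite /lx.
have [e|ne] := eqVneq i.+1 m.
  rewrite e modnn /alt /=.
  case om: (odd m).
    case: ifP => h5.
      have -> : i = 4 by lia.
      by [].
    have : odd (i - 5).
      have -> : i - 5 = (m - 6) by lia.
      by rewrite oddB ?om //; lia.
    by move=> ->.
  have : odd i by move: om; rewrite -e /=; case: (odd i).
  by move=> ->.
rewrite modn_small; last by lia.
case: (odd m); last exact: alt_next.
case: ifP => h5.
  case: ifP => h5'.
    have h4 : i < 4 by lia.
    by case: i {hi ne h5 h5'} h4 => [|[|[|[|]]]].
  have -> : i = 4 by lia.
  by rewrite subnn.
rewrite ifF; last by lia.
by rewrite subSn ?alt_next //; lia.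
Qed.

Lemma kk_prop n : 5 <= n -> n != 7 ->
  [/\ 5 * kk n <= n, (n - 5 * kk n) %% 3 = 0 & kk n < 3].
Proof. rewrite /kk => h5 h7; split; lia. Qed.

Lemma nth_next t : (nth 0 [:: 0; 5; 6] (t %% 3), nth 0 [:: 0; 5; 6] (t.+1 %% 3)) \in ey.
Proof.
have -> : t.+1 %% 3 = (t %% 3).+1 %% 3 by lia.
by case: (t %% 3) (ltn_pmod t (isT : 0 < 3)) => [|[|[|]]].
Qed.

Lemma ly_lt n j : ly n j < 7.
Proof.
rewrite /ly; case: ifP => _; first by apply: (ltn_trans (ltn_pmod j (isT : 0 < 5))).
by case: ((j - 5 * kk n) %% 3) (ltn_pmod (j - 5 * kk n) (isT : 0 < 3)) => [|[|[|]]].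
Qed.

Lemma ly_next n j : 5 <= n -> n != 7 -> j < n -> (ly n j, ly n (j.+1 %% n)) \in ey.
Proof.
move=> h5 h7 hj; have [k1 k2 k3] := kk_prop h5 h7.
rewrite /ly; set k := kk n in k1 k2 k3 *.
have [e|ne] := eqVneq j.+1 n.
  rewrite e modnn mod0n.
  have -> : (if 0 < 5 * k then 0 else nth 0 [:: 0; 5; 6] 0) = 0 by case: ifP.
  case: ifP => hjk.
    have -> : j %% 5 = 4 by lia.
    by [].
  have -> : (j - 5 * k) %% 3 = 2 by lia.
  by [].
have hj1 : j.+1 < n by rewrite ltn_neqAle ne hj.
rewrite (@modn_small j.+1 n) //.
case: ifP => hjk.
  case: ifP => hjk'.
    have h9 : j < 9 by lia.
    by case: j {hj ne hjk hjk' hj1} h9 => [|[|[|[|[|[|[|[|[|]]]]]]]]].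
  have -> : j %% 5 = 4 by lia.
  have -> : (j.+1 - 5 * k) %% 3 = 0 by lia.
  by [].
rewrite ifF; last by lia.
rewrite subSn; last by lia.
exact: nth_next.
Qed.

Section Graph.
Variables m n : nat.
Notation T := ('I_m * 'I_n)%type.
Notation adj := (cart_adj (@cycle_adj m) (@cycle_adj n)).

Definition nbr (v : T) (d : nat) : T :=
  if d == 0 then (ordS v.1, v.2) else if d == 1 then (ord_pred v.1, v.2)
  else if d == 2 then (v.1, ordS v.2) else (v.1, ord_pred v.2).

Definition dirof (p : T * {set T}) : nat :=
  if p.2 == [set p.1; nbr p.1 0] then 0 else if p.2 == [set p.1; nbr p.1 1] then 1
  else if p.2 == [set p.1; nbr p.1 2] then 2 else 3.

Definition col (v : T) (d : nat) := C (lx m v.1) (ly n v.2) d.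

Lemma cyc_nbr k (i j : 'I_k) : cycle_adj i j -> j = ordS i \/ j = ord_pred i.
Proof.
case/orP => /eqP h; [left | right]; first by apply: val_inj.
have -> : i = ordS j by apply: val_inj.
by rewrite ordSK.
Qed.

Lemma cyc_sym k (i j : 'I_k) : cycle_adj i j = cycle_adj j i.
Proof. by rewrite /cycle_adj orbC. Qed.

Lemma adj_sym (v w : T) : adj v w = adj w v.
Proof. by rewrite /cart_adj (cyc_sym v.1) (cyc_sym v.2) (eq_sym v.1) (eq_sym v.2). Qed.

Lemma adj_nbr (v w : T) : adj v w -> exists2 d, d < 4 & w = nbr v d.
Proof.
case: v w => [v1 v2] [w1 w2]; rewrite /cart_adj /=.
case/orP => /andP [/eqP <- /cyc_nbr [] ->].
- by exists 2.
- by exists 3.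
- by exists 0.
- by exists 1.
Qed.

Lemma inc_dir (p : T * {set T}) : is_incidence adj p ->
  p.2 = [set p.1; nbr p.1 (dirof p)] /\ dirof p < 4.
Proof.
case: p => v E /andP [] /=; rewrite inE => /existsP [x] /existsP [y] /andP [hxy /eqP ->] hv.
have [w hvw ew] : exists2 w, adj v w & [set x; y] = [set v; w].
  move: hv; rewrite !inE => /orP [] /eqP ->; first by exists y.
  by exists x; [rewrite adj_sym | rewrite setUC].
rewrite ew.
have [d hd ew'] := adj_nbr hvw.
rewrite /dirof /=.
case: ifP => [/eqP //| h0]; case: ifP => [/eqP //| h1]; case: ifP => [/eqP //| h2].
split => //.
move: h0 h1 h2; rewrite ew'.
by case: d hd {ew'} => [|[|[|[|]]]] //=; rewrite eqxx.
Qed.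

Lemma col_dist v d e : d < 4 -> e < 4 -> d != e -> col v d != col v e.
Proof. by move=> *; apply: C_dist => //; [apply: lx_lt | apply: ly_lt]. Qed.

Lemma col_lt v d : d < 4 -> col v d < 6.
Proof. by move=> *; apply: C_lt => //; [apply: lx_lt | apply: ly_lt]. Qed.

Lemma col_nbr v d e : 4 <= m -> 5 <= n -> n != 7 -> d < 4 -> e < 4 ->
  col v d != col (nbr v d) e.
Proof.
move=> hm hn h7 hd he; case: v => v1 v2.
case: d hd => [|[|[|[|]]]] // _; rewrite /col /nbr /=.
- by case/andP: (C_x (lx_next hm (ltn_ord v1)) (ly_lt n v2) he).
- rewrite -{1}(ord_predK v1) /=.
  by case/andP: (C_x (lx_next hm (ltn_ord (ord_pred v1))) (ly_lt n v2) he).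
- by case/andP: (C_y (ly_next hn h7 (ltn_ord v2)) (lx_lt m v1) he).
- rewrite -{1}(ord_predK v2) /=.
  by case/andP: (C_y (ly_next hn h7 (ltn_ord (ord_pred v2))) (lx_lt m v1) he).
Qed.

Lemma colorable : 4 <= m -> 5 <= n -> n != 7 -> inc_colorable adj 6.
Proof.
move=> hm hn h7.
apply/existsP; exists [ffun p => (inord (col p.1 (dirof p)) : 'I_6)].
apply/forallP => p; apply/forallP => q; apply/implyP => /and4P [Ip Iq pq hadj].
rewrite !ffunE.
have [Ep dp] := inc_dir Ip; have [Eq dq] := inc_dir Iq.
suff H : col p.1 (dirof p) != col q.1 (dirof q).
  apply: contra H => /eqP /(congr1 val); rewrite /= !inordK ?col_lt // => ->.
  by [].
case: p q Ep dp Eq dq pq hadj {Ip Iq} => v E [x F] /= Ep dp Eq dq pq.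
set d := dirof (v, E) in Ep dp pq *; set e := dirof (x, F) in Eq dq pq *.
rewrite /inc_adjacent /=.
have HS : forall (a b c : T), a != b -> a \in [set b; c] -> a = c.
  by move=> a b c nab; rewrite !inE (negbTE nab) /= => /eqP.
have [vx|nvx] := eqVneq v x.
  move=> _; subst x.
  have [de|nde] := eqVneq d e; last exact: col_dist.
  by move: pq; rewrite Ep Eq de eqxx.
have nxv : x != v by rewrite eq_sym.
case/or4P.
- by [].
- move/eqP=> EF.
  have : x \in [set v; nbr v d] by rewrite -Ep EF Eq !inE eqxx.
  move/(HS _ _ _ nxv) ->.
  exact: col_nbr.
- move/eqP=> h.
  have : x \in [set v; nbr v d] by rewrite -Ep -h !inE eqxx orbT.
  move/(HS _ _ _ nxv) ->.
  exact: col_nbr.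
- move/eqP=> h.
  have : v \in [set x; nbr x e] by rewrite -Eq -h !inE eqxx.
  move/(HS _ _ _ nvx) => ->.
  by rewrite eq_sym; apply: col_nbr.
Qed.

End Graph.

Theorem lemma3 (m n : nat) :
  5 <= m -> 5 <= n -> m != 6 -> m != 8 -> n != 7 ->
  inc_chi (cart_adj (@cycle_adj m) (@cycle_adj n)) <= 6.
Proof.
move=> hm hn _ _ h7.
have hN : 6 < (#|{: ('I_m * 'I_n) * {set 'I_m * 'I_n}}|).+1.
  rewrite !card_prod !card_ord.
  have : 0 < #|{: {set 'I_m * 'I_n}}| by apply/card_gt0P; exists set0.
  move: (#|_|) => k hk; nia.
rewrite /inc_chi leqNgt; apply/negP => H.
have := before_find 0 H.
by rewrite nth_iota // add0n (@colorable m n) //; apply: ltnW.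
Qed.
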